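(* For every $t\ge 0$, every $k\ge 1$ and every collection $\Omega$ of functions, $$\rho_1\bigl(\mathsf{vwl}_k^{(t)}\bigr)=\rho_1\bigl(\mathsf{TL}_{k+1}^{(t)}(\Omega)\bigr).$$
   Context: Fix integers $n\ge 1$ and $\ell\ge 1$. A graph is a triple $G=(V_G,E_G,\mathrm{col}_G)$ with $V_G=[n]=\{1,\dots,n\}$, $E_G$ a set of unordered pairs of distinct vertices (undirected, no loops), and a vertex labelling $\mathrm{col}_G:V_G\to\mathbb R^\ell$; $N_G(v)=\{u:uv\in E_G\}$. Let $\mathcal G=\mathcal G_0$ be the set of all such graphs and, for $s\ge 1$, $\mathcal G_s=\{(G,\mathbf v):G\in\mathcal G,\ \mathbf v\in V_G^s\}$. Tensor language $\mathsf{TL}(\Omega)$: let $\Omega$ be a collection of functions, each of the form $f:\mathbb R^p\to\mathbb R$ for some $p\ge1$ depending on $f$. Expressions are generated by $\varphi::=\mathbf 1_{x=y}\mid \mathbf 1_{x\neq y}\mid E(x,y)\mid P_s(x)\mid \varphi\cdot\varphi\mid \varphi+\varphi\mid a\cdot\varphi\mid f(\varphi_1,\dots,\varphi_p)\mid \sum_x\varphi$, with $x,y$ index variables, $s\in[\ell]$, $a\in\mathbb R$, $f\in\Omega$ of arity $p$. Free variables: $\mathrm{free}(\mathbf 1_{x\,\mathrm{op}\,y})=\mathrm{free}(E(x,y))=\{x,y\}$, $\mathrm{free}(P_s(x))=\{x\}$; for $\varphi_1\cdot\varphi_2$, $\varphi_1+\varphi_2$, $f(\varphi_1,\dots,\varphi_p)$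 the union of the components' free variables; $\mathrm{free}(a\cdot\varphi)=\mathrm{free}(\varphi)$; $\mathrm{free}(\sum_x\varphi)=\mathrm{free}(\varphi)\setminus\{x\}$. Semantics: for a graph $G$ and a valuation $\nu$ mapping variables to $V_G$: $[\![E(x,y)]\!]^\nu_G=1$ if $\nu(x)\nu(y)\in E_G$ and $0$ otherwise; $[\![P_s(x)]\!]^\nu_G=\mathrm{col}_G(\nu(x))_s$; $[\![\mathbf 1_{x\,\mathrm{op}\,y}]\!]^\nu_G=1$ if $\nu(x)\,\mathrm{op}\,\nu(y)$ and $0$ otherwise; $\cdot$, $+$, scalar multiplication and $f$ act on the values of the components; $[\![\sum_x\varphi]\!]^\nu_G=\sum_{v\in V_G}[\![\varphi]\!]^{\nu[x\mapsto v]}_G$. For $\varphi$ with free variables among $x_1,\dots,x_s$ and $\mathbf v\in V_G^s$, $[\![\varphi]\!]^{\mathbf v}_G$ denotes the value under $x_i\mapsto v_i$. Summation depth $\mathrm{sd}$: $0$ for atoms, maximum over the components for $\cdot$, $+$, $f(\dots)$, $\mathrm{sd}(a\cdot\varphi)=\mathrm{sd}(\varphi)$, $\mathrm{sd}(\sum_x\varphi)=\mathrm{sd}(\varphi)+1$. $\mathsf{TL}_k(\Omega)$ is the set of expressions in which only variables from $\{x_1,\dots,x_k\}$ occur (free or bound; variables may be re-bound), and $\mathsf{TL}_k^{(t)}(\Omega)$ its subset of summation depth at most $t$. Separation power: for a set $\mathcal F$ of functions $f:\mathcal G_s\to\mathbb R^{m_f}$, $\rho_s(\mathcal F)=\{((G,\mathbf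 v),(H,\mathbf w))\in\mathcal G_s\times\mathcal G_s: f(G,\mathbf v)=f(H,\mathbf w)\ \forall f\in\mathcal F\}$ (for $s=0$, pairs of graphs), and $\rho_s(f)=\rho_s(\{f\})$. For a set $\mathcal L$ of expressions, $\rho_s(\mathcal L)$ is the set of pairs with $[\![\varphi]\!]^{\mathbf v}_G=[\![\varphi]\!]^{\mathbf w}_H$ for all $\varphi\in\mathcal L$ whose free variables are among $x_1,\dots,x_s$ (for $s=0$: all closed expressions in $\mathcal L$). $k$-dimensional Weisfeiler–Leman ($k\ge1$): for $\mathbf v\in V_G^k$, the atomic type $\mathsf{atp}_k(G,\mathbf v)$ records, for all $1\le i<j\le k$, whether $v_i=v_j$ and whether $v_iv_j\in E_G$, together with $\mathrm{col}_G(v_i)$ for all $i\in[k]$. Set $\mathsf{wl}_k^{(0)}(G,\mathbf v)=\mathsf{atp}_k(G,\mathbf v)$ and $\mathsf{wl}_k^{(t+1)}(G,\mathbf v)=\bigl(\mathsf{wl}_k^{(t)}(G,\mathbf v),\{\!\{(\mathsf{atp}_{k+1}(G,(v_1,\dots,v_k,u)),\mathsf{wl}_k^{(t)}(G,\mathbf v[u/1]),\dots,\mathsf{wl}_k^{(t)}(G,\mathbf v[u/k])):u\in V_G\}\!\}\bigr)$, where $\mathbf v[u/i]$ replaces the $i$-th entry of $\mathbf v$ by $u$ and $\{\!\{\cdot\}\!\}$ denotes a multiset. Labels are compared as formal objects across graphs. $\mathsf{vwl}_k^{(t)}(G,v)=\mathsf{wl}_k^{(t)}(G,(v,\dots,v))$.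 $\rho_1(\mathsf{vwl}_k^{(t)})$ is the set of pairs $((G,v),(H,w))$ with $\mathsf{vwl}_k^{(t)}(G,v)=\mathsf{vwl}_k^{(t)}(H,w)$. *)

(* Defs.v *)
From Stdlib Require Import Reals.
From mathcomp Require Import all_boot all_fingroup.

Set Implicit Arguments.
Unset Strict Implicit.
Unset Printing Implicit Defensive.

Record graph (n l : nat) := Graph {
  adj : rel 'I_n;
  adj_sym : symmetric adj;
  adj_irr : irreflexive adj;
  col : 'I_n -> 'I_l -> R
}.

(** Omega is a collection of functions indexed by a type [Om]; the function
    indexed by [o] has arity [ar o] and is [fn o : R^(ar o) -> R].
    Index variables are natural numbers: variable [i] stands for x_i. *)
Inductive expr (l : nat) (Om : Type) (ar : Om -> nat) : Type :=
| EEq  (x y : nat)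
| ENeq (x y : nat)
| EEdge (x y : nat)
| ELab (s : 'I_l) (x : nat)
| EMul (e1 e2 : expr l ar)
| EAdd (e1 e2 : expr l ar)
| EScale (a : R) (e : expr l ar)
| EApp (o : Om) (args : 'I_(ar o) -> expr l ar)
| ESum (x : nat) (e : expr l ar).

Arguments EEq {l Om ar}. Arguments ENeq {l Om ar}. Arguments EEdge {l Om ar}.
Arguments ELab {l Om ar}. Arguments EMul {l Om ar}. Arguments EAdd {l Om ar}.
Arguments EScale {l Om ar}. Arguments EApp {l Om ar}. Arguments ESum {l Om ar}.

Fixpoint is_free l Om (ar : Om -> nat) (x : nat) (e : expr l ar) : Prop :=
  match e with
  | EEq a b | ENeq a b | EEdge a b => x = a \/ x = b
  | ELab _ a => x = a
  | EMul e1 e2 | EAdd e1 e2 => is_free x e1 \/ is_free x e2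
  | EScale _ e1 => is_free x e1
  | EApp o args => exists i, is_free x (args i)
  | ESum y e1 => x <> y /\ is_free x e1
  end.

Fixpoint vars_among l Om (ar : Om -> nat) (k : nat) (e : expr l ar) : Prop :=
  match e with
  | EEq a b | ENeq a b | EEdge a b => (1 <= a <= k) /\ (1 <= b <= k)
  | ELab _ a => 1 <= a <= k
  | EMul e1 e2 | EAdd e1 e2 => vars_among k e1 /\ vars_among k e2
  | EScale _ e1 => vars_among k e1
  | EApp o args => forall i, vars_among k (args i)
  | ESum y e1 => (1 <= y <= k) /\ vars_among k e1
  end.

Fixpoint sd l Om (ar : Om -> nat) (e : expr l ar) : nat :=
  match e with
  | EEq _ _ | ENeq _ _ | EEdge _ _ | ELab _ _ => 0
  | EMul e1 e2 | EAdd e1 e2 => maxn (sd e1) (sd e2)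
  | EScale _ e1 => sd e1
  | EApp o args => \max_(i < ar o) sd (args i)
  | ESum _ e1 => (sd e1).+1
  end.

Definition in_TL l Om (ar : Om -> nat) (k t : nat) (e : expr l ar) : Prop :=
  vars_among k e /\ sd e <= t.

Definition free_among l Om (ar : Om -> nat) (s : nat) (e : expr l ar) : Prop :=
  forall x, is_free x e -> 1 <= x <= s.

Definition upd n (nu : nat -> 'I_n) (x : nat) (v : 'I_n) : nat -> 'I_n :=
  fun y => if y == x then v else nu y.

Fixpoint eval n l Om (ar : Om -> nat) (fn : forall o, ('I_(ar o) -> R) -> R)
    (G : graph n l) (nu : nat -> 'I_n) (e : expr l ar) : R :=
  match e with
  | EEq a b => if nu a == nu b then R1 else R0
  | ENeq a b => if nu a != nu b then R1 else R0
  | EEdge a b => if adj G (nu a) (nu b) then R1 else R0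
  | ELab s a => col G (nu a) s
  | EMul e1 e2 => Rmult (eval fn G nu e1) (eval fn G nu e2)
  | EAdd e1 e2 => Rplus (eval fn G nu e1) (eval fn G nu e2)
  | EScale a e1 => Rmult a (eval fn G nu e1)
  | EApp o args => fn o (fun i => eval fn G nu (args i))
  | ESum x e1 => \big[Rplus/R0]_(v < n) eval fn G (upd nu x v) e1
  end.

(** * k-dimensional Weisfeiler-Leman.
    Tuples in V^m are functions 'I_m -> 'I_n (entry i stands for v_{i+1}). *)

Definition atp n l m (G : graph n l) (v : 'I_m -> 'I_n) :
    {ffun 'I_m * 'I_m -> bool * bool} * {ffun 'I_m -> {ffun 'I_l -> R}} :=
  ([ffun ij : 'I_m * 'I_m =>
      if ij.1 < ij.2 then (v ij.1 == v ij.2, adj G (v ij.1) (v ij.2))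
      else (false, false)],
   [ffun i => [ffun s => col G (v i) s]]).

Definition snoc n k (v : 'I_k -> 'I_n) (u : 'I_n) : 'I_k.+1 -> 'I_n :=
  fun i => if (insub (val i) : option 'I_k) is Some j then v j else u.

Definition repl n k (v : 'I_k -> 'I_n) (i : 'I_k) (u : 'I_n) : 'I_k -> 'I_n :=
  fun j => if j == i then u else v j.

(** [wl_same k t G H v w] holds iff wl_k^{(t)}(G, v) = wl_k^{(t)}(H, w),
    i.e. equality of the WL labels as formal objects: a pair is equal iff its
    components are, and two multisets {{ f u : u in V_G }}, {{ g u : u in V_H }}
    are equal iff some bijection sigma : V_G -> V_H matches equal elements
    (both vertex sets are [n]). *)
Fixpoint wl_same n l (k t : nat) (G H : graph n l) (v w : 'I_k -> 'I_n) : Prop :=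
  match t with
  | 0 => atp G v = atp H w
  | t'.+1 =>
      wl_same t' G H v w /\
      exists sigma : {perm 'I_n}, forall u : 'I_n,
        atp G (snoc v u) = atp H (snoc w (sigma u)) /\
        forall i : 'I_k, wl_same t' G H (repl v i u) (repl w i (sigma u))
  end.

Definition vwl_same n l (k t : nat) (G H : graph n l) (v w : 'I_n) : Prop :=
  @wl_same n l k t G H (fun _ : 'I_k => v) (fun _ : 'I_k => w).

(** The valuation maps every variable to v (resp. w);
    only x_1 can be free, so this is the value under x_1 |-> v. *)
Definition rho1_TL n l Om (ar : Om -> nat) (fn : forall o, ('I_(ar o) -> R) -> R)
    (k t : nat) (G H : graph n l) (v w : 'I_n) : Prop :=
  forall e : expr l ar, in_TL k t e -> free_among 1 e ->
    eval fn G (fun _ => v) e = eval fn H (fun _ => w) e.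

(* Main.v *)
Require Import Defs.
From Stdlib Require Import Reals.
From mathcomp Require Import all_boot all_fingroup.
From Stdlib Require Import FunctionalExtensionality Classical ClassicalEpsilon Lra.
From Stdlib Require List.
From HB Require Import structures.

Set Implicit Arguments.
Unset Strict Implicit.
Unset Printing Implicit Defensive.

Lemma Rplus_assoc' : associative Rplus.
Proof. by move=> x y z; rewrite Rplus_assoc. Qed.
HB.instance Definition _ := Monoid.isComLaw.Build R R0 Rplus Rplus_assoc' Rplus_comm Rplus_0_l.

Definition atpP n l m (X Y : graph n l) (a b : 'I_m -> 'I_n) : Prop :=
  (forall i j, (a i == a j) = (b i == b j)) /\
  (forall i j, adj X (a i) (a j) = adj Y (b i) (b j)) /\
  (forall i s, col X (a i) s = col Y (b i) s).

Lemma atpE n l m (X Y : graph n l) (a b : 'I_m -> 'I_n) :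
  atp X a = atp Y b <-> atpP X Y a b.
Proof.
split.
- move=> E.
  have E1 := congr1 fst E; have E2 := congr1 snd E; rewrite /= in E1 E2.
  have H1 : forall i j : 'I_m, i < j ->
      (a i == a j) = (b i == b j) /\ adj X (a i) (a j) = adj Y (b i) (b j).
    move=> i j lij; move/ffunP: E1 => /(_ (i, j)); rewrite !ffunE /= lij.
    by case.
  split; [|split].
  + move=> i j; case: (ltngtP i j) => [lij|lji|eij].
    * by case: (H1 _ _ lij).
    * by rewrite eq_sym (eq_sym (b i)); case: (H1 _ _ lji).
    * by rewrite (ord_inj eij) !eqxx.
  + move=> i j; case: (ltngtP i j) => [lij|lji|eij].
    * by case: (H1 _ _ lij).
    * by rewrite adj_sym (adj_sym Y); case: (H1 _ _ lji).
    * by rewrite (ord_inj eij) !adj_irr.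
  + move=> i s; move/ffunP: E2 => /(_ i) /ffunP /(_ s); by rewrite !ffunE.
- case=> [E1 [E2 E3]]; congr pair.
  + apply/ffunP => [[i j]]; rewrite !ffunE /=; case: ifP => // _.
    by rewrite E1 E2.
  + apply/ffunP => i; rewrite !ffunE; apply/ffunP => s; by rewrite !ffunE E3.
Qed.

Lemma atpP_comp n l m m' (X Y : graph n l) (a b : 'I_m -> 'I_n) (h : 'I_m' -> 'I_m) :
  atpP X Y a b -> atpP X Y (fun i => a (h i)) (fun i => b (h i)).
Proof. by case=> [E1 [E2 E3]]; split; [|split] => *; rewrite ?E1 ?E2 ?E3. Qed.

Lemma snoc_lift n k (a : 'I_k -> 'I_n) u j : snoc a u (lift ord_max j) = a j.
Proof.
have H : val (lift ord_max j) < k.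
  by change (nat_of_ord (lift ord_max j) < k); rewrite lift_max ltn_ord.
rewrite /snoc; rewrite insubT /=; congr a; apply: ord_inj => /=.
by rewrite /bump leqNgt ltn_ord.
Qed.

Lemma snoc_max n k (a : 'I_k -> 'I_n) u : snoc a u ord_max = u.
Proof. by rewrite /snoc insubF //= ltnn. Qed.

Lemma W_refl n l k t (X : graph n l) (a : 'I_k -> 'I_n) : wl_same t X X a a.
Proof.
elim: t a => [|t IH] a //=; split; first exact: IH.
exists 1%g => u; rewrite perm1; split=> // i; exact: IH.
Qed.

Lemma W_sym n l k t (X Y : graph n l) (a b : 'I_k -> 'I_n) :
  wl_same t X Y a b -> wl_same t Y X b a.
Proof.
elim: t a b => [|t IH] a b /=; first by move->.
case=> Hs [s S]; split; first exact: IH.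
exists (s^-1)%g => u; have [E1 E2] := S ((s^-1)%g u); rewrite permKV in E1 E2.
split; first by rewrite E1. move=> i; exact: IH.
Qed.

Lemma W_trans n l k t (X Y Z : graph n l) (a b c : 'I_k -> 'I_n) :
  wl_same t X Y a b -> wl_same t Y Z b c -> wl_same t X Z a c.
Proof.
elim: t a b c => [|t IH] a b c /=; first by move=> -> ->.
case=> H1 [s1 S1] [H2 [s2 S2]]; split; first exact: IH H1 H2.
exists (s1 * s2)%g => u; rewrite permM; have [A1 B1] := S1 u; have [A2 B2] := S2 (s1 u).
split; first by rewrite A1 A2. move=> i; exact: IH (B1 i) (B2 i).
Qed.

Lemma W_atp n l k t (X Y : graph n l) (a b : 'I_k -> 'I_n) :
  wl_same t X Y a b -> atp X a = atp Y b.
Proof. elim: t => [|t IH] //= [H _]; exact: IH. Qed.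

Lemma W_perm n l k t (X Y : graph n l) (a b : 'I_k -> 'I_n) (p : 'I_k -> 'I_k) :
  injective p -> wl_same t X Y a b ->
  wl_same t X Y (fun i => a (p i)) (fun i => b (p i)).
Proof.
move=> ip; elim: t a b => [|t IH] a b /=.
- by move/atpE => H; apply/atpE; apply: atpP_comp.
- case=> H [s S]; split; first exact: IH.
  exists s => u; have [A B] := S u; split.
  + pose q := fun i : 'I_k.+1 =>
      if unlift ord_max i is Some j then lift ord_max (p j) else ord_max.
    have E : forall (c : 'I_k -> 'I_n) (w : 'I_n),
        snoc (fun i => c (p i)) w = (fun i => snoc c w (q i)).
      move=> c w; apply: functional_extensionality => i; rewrite /q.
      by case: unliftP => [j ->|->]; rewrite ?snoc_lift ?snoc_max.
    by rewrite !E; apply/atpE; apply: atpP_comp; apply/atpE.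
  + move=> i.
    have E : forall (c : 'I_k -> 'I_n) (w : 'I_n),
        repl (fun i => c (p i)) i w = (fun m => repl c (p i) w (p m)).
      move=> c w; apply: functional_extensionality => m; by rewrite /repl (inj_eq ip).
    rewrite !E; apply: IH; exact: B.
Qed.

Definition tup n k (nu : nat -> 'I_n) : 'I_k.+1 -> 'I_n := fun i => nu i.+1.
Definition drp n k (nu : nat -> 'I_n) (j : 'I_k.+1) : 'I_k -> 'I_n :=
  fun m => nu (lift j m).+1.

Lemma var_ord k x : 1 <= x <= k.+1 -> exists i : 'I_k.+1, x = i.+1.
Proof. case/andP; case: x => // x _ hx; by exists (Ordinal hx). Qed.

Lemma upd_eq n (nu : nat -> 'I_n) x v : upd nu x v x = v.
Proof. by rewrite /upd eqxx. Qed.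

Lemma upd_ne n (nu : nat -> 'I_n) x v y : y != x -> upd nu x v y = nu y.
Proof. by rewrite /upd => /negbTE ->. Qed.

Lemma ord_neS k (i j : 'I_k) : i != j -> i.+1 != j.+1.
Proof. by rewrite eqSS. Qed.

Lemma drp_upd_eq n k (nu : nat -> 'I_n) (j : 'I_k.+1) u :
  drp (upd nu j.+1 u) j = drp nu j.
Proof.
apply: functional_extensionality => m; rewrite /drp upd_ne //.
apply: ord_neS; by rewrite eq_sym neq_lift.
Qed.

Lemma tup_upd n k (nu : nat -> 'I_n) (j : 'I_k.+1) u :
  tup (upd nu j.+1 u) = (fun i => snoc (drp nu j) u
     (if unlift j i is Some m then lift ord_max m else ord_max)).
Proof.
apply: functional_extensionality => i; rewrite /tup.
case: unliftP => [m ->|->]; rewrite ?snoc_lift ?snoc_max ?upd_eq //.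
rewrite upd_ne //; apply: ord_neS; by rewrite eq_sym neq_lift.
Qed.

Lemma drp_upd_neq n k (j : 'I_k.+1) (i : 'I_k) :
  exists p : 'I_k -> 'I_k, injective p /\ forall (nu : nat -> 'I_n) u,
    drp (upd nu j.+1 u) (lift j i) = (fun m => repl (drp nu j) i u (p m)).
Proof.
pose p := fun m => if unlift j (lift (lift j i) m) is Some m' then m' else i.
have key : forall m, (if p m == i then j else lift j (p m)) = lift (lift j i) m.
  move=> m; rewrite /p; case: unliftP => [m' Em|Em].
  - case: eqP => [Hm'|_]; last by rewrite Em.
    by move: (neq_lift (lift j i) m); rewrite Em Hm' eqxx.
  - by rewrite eqxx Em.
exists p; split.
- move=> m1 m2 E; apply: (@lift_inj _ (lift j i)); by rewrite -!key E.
- move=> nu u; apply: functional_extensionality => m; rewrite /drp /repl -key.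
  case: (p m == i); first by rewrite upd_eq.
  rewrite upd_ne //; apply: ord_neS; by rewrite eq_sym neq_lift.
Qed.

Definition Good n l k s (G H : graph n l) (nu mu : nat -> 'I_n) :=
  atp G (@tup n k nu) = atp H (@tup n k mu) /\
  forall j : 'I_k.+1, wl_same s G H (drp nu j) (drp mu j).

Lemma fwd n l (Om : Type) (ar : Om -> nat) (fn : forall o, ('I_(ar o) -> R) -> R)
    k (G H : graph n l) (e : expr l ar) :
  forall s nu mu, vars_among k.+1 e -> sd e <= s -> Good k s G H nu mu ->
    eval fn G nu e = eval fn H mu e.
Proof.
elim: e => [x y|x y|x y|sl x|e1 IH1 e2 IH2|e1 IH1 e2 IH2|a e1 IH|o args IH|x e1 IH]
  s nu mu /=.
- case=> /var_ord [i ->] /var_ord [j ->] _ [Ha _]; move/atpE: Ha => [E1 _].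
  by have := E1 i j; rewrite /tup => ->.
- case=> /var_ord [i ->] /var_ord [j ->] _ [Ha _]; move/atpE: Ha => [E1 _].
  by have := E1 i j; rewrite /tup => ->.
- case=> /var_ord [i ->] /var_ord [j ->] _ [Ha _]; move/atpE: Ha => [_ [E2 _]].
  by have := E2 i j; rewrite /tup => ->.
- case/var_ord => [i ->] _ [Ha _]; move/atpE: Ha => [_ [_ E3]].
  by have := E3 i sl; rewrite /tup => ->.
- case=> V1 V2; rewrite geq_max => /andP [S1 S2] Hg.
  by rewrite (IH1 s nu mu) // (IH2 s nu mu).
- case=> V1 V2; rewrite geq_max => /andP [S1 S2] Hg.
  by rewrite (IH1 s nu mu) // (IH2 s nu mu).
- move=> V S Hg; by rewrite (IH s nu mu).
- move=> V S Hg; congr (fn o); apply: functional_extensionality => i.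
  apply: (IH i s nu mu) => //; apply: leq_trans _ S; exact: leq_bigmax.
- case=> /var_ord [j ->] V; case: s => // s S [Ha Hd].
  have [Hd0 [sg Hs]] := Hd j.
  rewrite [in RHS](reindex_inj (@perm_inj _ sg)) /=.
  apply: eq_bigr => u _; apply: (IH s) => //; split.
  + rewrite !tup_upd; apply/atpE; apply: atpP_comp; apply/atpE; exact: (Hs u).1.
  + move=> j'; case: (unliftP j j') => [i ->|->].
    * have [p [ip Ep]] := @drp_upd_neq n k j i.
      rewrite (Ep nu u) (Ep mu (sg u)); apply: W_perm ip _; exact: (Hs u).2 i.
    * by rewrite !drp_upd_eq.
Qed.

Lemma fwd_main n l (Om : Type) (ar : Om -> nat) (fn : forall o, ('I_(ar o) -> R) -> R)
    (t k : nat) (hk : 0 < k) (G H : graph n l) (v w : 'I_n) :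
  vwl_same k t G H v w -> rho1_TL fn k.+1 t G H v w.
Proof.
move=> W e [V S] _; apply: (@fwd n l Om ar fn k G H e t _ _ V S); split.
- have := W_atp W; move/atpE => [_ [_ E3]]; apply/atpE; split; [|split].
  + by move=> i j; rewrite /tup !eqxx.
  + by move=> i j; rewrite /tup !adj_irr.
  + move=> i s; exact: E3 (Ordinal hk) s.
- move=> j; exact: W.
Qed.

Definition gr n l (G H : graph n l) (g : bool) := if g then G else H.

Definition Real n l (Om : Type) (ar : Om -> nat) (fn : forall o, ('I_(ar o) -> R) -> R)
    k (G H : graph n l) m s (F : bool -> ('I_m -> 'I_n) -> R) : Prop :=
  exists e : ('I_m -> nat) -> expr l ar,
  forall p : 'I_m -> nat, (forall i, 1 <= p i <= k.+1) ->
    vars_among k.+1 (e p) /\ sd (e p) <= s /\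
    (forall x, is_free x (e p) -> exists i, x = p i) /\
    forall nu, eval fn G nu (e p) = F true (fun i => nu (p i)) /\
               eval fn H nu (e p) = F false (fun i => nu (p i)).


Lemma R_eq n l Om ar fn k (G H : graph n l) m s (i j : 'I_m) :
  @Real n l Om ar fn k G H m s (fun g a => if a i == a j then R1 else R0).
Proof.
exists (fun p => EEq (p i) (p j)) => p hp /=; split; first by split; apply: hp.
split=> //; split; last by [].
by move=> x [->|->]; [exists i|exists j].
Qed.

Lemma R_edge n l Om ar fn k (G H : graph n l) m s (i j : 'I_m) :
  @Real n l Om ar fn k G H m s
    (fun g a => if adj (gr G H g) (a i) (a j) then R1 else R0).
Proof.
exists (fun p => EEdge (p i) (p j)) => p hp /=; split; first by split; apply: hp.
split=> //; split; last by [].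
by move=> x [->|->]; [exists i|exists j].
Qed.

Lemma R_lab n l Om ar fn k (G H : graph n l) m s (i : 'I_m) (sl : 'I_l) :
  @Real n l Om ar fn k G H m s (fun g a => col (gr G H g) (a i) sl).
Proof.
exists (fun p => ELab sl (p i)) => p hp /=; split; first by apply: hp.
split=> //; split; last by [].
by move=> x ->; exists i.
Qed.

Lemma R_const n l Om ar fn k (G H : graph n l) m s (i0 : 'I_m) (c : R) :
  @Real n l Om ar fn k G H m s (fun _ _ => c).
Proof.
exists (fun p => EScale c (EEq (p i0) (p i0))) => p hp /=; split; first by split; apply: hp.
split=> //; split; last by move=> nu; rewrite eqxx Rmult_1_r.
by move=> x [->|->]; exists i0.
Qed.

Lemma R_mul n l Om ar fn k (G H : graph n l) m s F1 F2 :
  @Real n l Om ar fn k G H m s F1 -> @Real n l Om ar fn k G H m s F2 ->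
  @Real n l Om ar fn k G H m s (fun g a => Rmult (F1 g a) (F2 g a)).
Proof.
move=> [e1 h1] [e2 h2]; exists (fun p => EMul (e1 p) (e2 p)) => p hp /=.
have [V1 [S1 [Fr1 E1]]] := h1 p hp; have [V2 [S2 [Fr2 E2]]] := h2 p hp.
split=> //; split; first by rewrite geq_max S1 S2.
split; first by move=> x [/Fr1|/Fr2].
by move=> nu; rewrite (E1 nu).1 (E1 nu).2 (E2 nu).1 (E2 nu).2.
Qed.

Lemma R_add n l Om ar fn k (G H : graph n l) m s F1 F2 :
  @Real n l Om ar fn k G H m s F1 -> @Real n l Om ar fn k G H m s F2 ->
  @Real n l Om ar fn k G H m s (fun g a => Rplus (F1 g a) (F2 g a)).
Proof.
move=> [e1 h1] [e2 h2]; exists (fun p => EAdd (e1 p) (e2 p)) => p hp /=.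
have [V1 [S1 [Fr1 E1]]] := h1 p hp; have [V2 [S2 [Fr2 E2]]] := h2 p hp.
split=> //; split; first by rewrite geq_max S1 S2.
split; first by move=> x [/Fr1|/Fr2].
by move=> nu; rewrite (E1 nu).1 (E1 nu).2 (E2 nu).1 (E2 nu).2.
Qed.

Lemma R_scale n l Om ar fn k (G H : graph n l) m s F1 c :
  @Real n l Om ar fn k G H m s F1 ->
  @Real n l Om ar fn k G H m s (fun g a => Rmult c (F1 g a)).
Proof.
move=> [e1 h1]; exists (fun p => EScale c (e1 p)) => p hp /=.
have [V1 [S1 [Fr1 E1]]] := h1 p hp.
do 3 split=> //; by move=> nu; rewrite (E1 nu).1 (E1 nu).2.
Qed.

Lemma R_mono n l Om ar fn k (G H : graph n l) m s s' F :
  s <= s' -> @Real n l Om ar fn k G H m s F -> @Real n l Om ar fn k G H m s' F.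
Proof.
move=> ss [e h]; exists e => p hp; have [V [S X]] := h p hp.
split=> //; split=> //; exact: leq_trans S ss.
Qed.

Lemma R_ext n l Om ar fn k (G H : graph n l) m s F F' :
  (forall g a, F g a = F' g a) ->
  @Real n l Om ar fn k G H m s F -> @Real n l Om ar fn k G H m s F'.
Proof.
move=> EF [e h]; exists e => p hp; have [V [S [X Y]]] := h p hp.
do 3 split=> //; by move=> nu; rewrite -!EF.
Qed.

Lemma R_reidx n l Om ar fn k (G H : graph n l) m m' s F (h : 'I_m' -> 'I_m) :
  @Real n l Om ar fn k G H m' s F ->
  @Real n l Om ar fn k G H m s (fun g a => F g (fun i => a (h i))).
Proof.
move=> [e he]; exists (fun p => e (fun i => p (h i))) => p hp.
have [V [S [X Y]]] := he (fun i => p (h i)) (fun i => hp (h i)).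
do 2 split=> //; split; last by [].
by move=> x /X [i ->]; exists (h i).
Qed.

Lemma free_var k (p : 'I_k -> nat) :
  exists z, (0 < z <= k.+1) && [forall i, p i != z].
Proof.
pose q := fun i => (inord (p i).-1 : 'I_k.+1).
have [y Hy] : exists y : 'I_k.+1, y \notin codom q.
  case: (pickP [pred y | y \notin codom q]) => [y Hy|H0]; first by exists y.
  exfalso.
  have C : #|'I_k.+1| <= #|codom q|.
    apply: subset_leq_card; apply/subsetP => y _; by move: (H0 y) => /= /negbFE.
  rewrite card_ord in C; have := card_size (codom q); rewrite size_codom card_ord.
  by move=> C'; have := leq_trans C C'; rewrite ltnn.
exists y.+1; rewrite /= ltn_ord; apply/forallP => i; apply/eqP => E.
have Eq : q i = y by rewrite /q E /= inord_val.
by rewrite -Eq codom_f in Hy.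
Qed.

Definition snocN k (p : 'I_k -> nat) (z : nat) : 'I_k.+1 -> nat :=
  fun i => if unlift ord_max i is Some j then p j else z.

Lemma R_sum n l Om ar fn k (G H : graph n l) s F :
  @Real n l Om ar fn k G H k.+1 s F ->
  @Real n l Om ar fn k G H k s.+1
    (fun g a => \big[Rplus/R0]_(u < n) F g (snoc a u)).
Proof.
move=> [e he].
exists (fun p => ESum (xchoose (free_var p)) (e (snocN p (xchoose (free_var p))))).
move=> p hp; have := xchooseP (free_var p); set z := xchoose (free_var p).
move=> /andP [Hz1 /forallP Hz2].
have hp' : forall i, 0 < snocN p z i <= k.+1.
  by move=> i; rewrite /snocN; case: unliftP => [j _|_] //; apply: hp.
have [V [S [X Y]]] := he _ hp'.
split; first by split.
split; first by [].
split.
- move=> x /= [xz /X [i]]; rewrite /snocN; case: unliftP => [j _ ->|_ E] //.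
  + by exists j.
- have EE : forall (nu : nat -> 'I_n) (v : 'I_n), (fun i => upd nu z v (snocN p z i)) =
                       snoc (fun i => nu (p i)) v.
    move=> nu v; apply: functional_extensionality => i; rewrite /snocN.
    case: unliftP => [j ->|->]; last by rewrite upd_eq snoc_max.
    by rewrite snoc_lift upd_ne.
  move=> nu /=; split; apply: eq_bigr => v _; by rewrite ?(Y (upd nu z v)).1 ?(Y (upd nu z v)).2 EE.
Qed.

Definition Ind n l Om ar fn k (G H : graph n l) m s
    (P : bool -> ('I_m -> 'I_n) -> Prop) : Prop :=
  exists F, @Real n l Om ar fn k G H m s F /\
    forall g a, (P g a -> F g a = R1) /\ (~ P g a -> F g a = R0).

Lemma I_iff n l Om ar fn k (G H : graph n l) m s P Q :
  (forall g a, P g a <-> Q g a) ->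
  @Ind n l Om ar fn k G H m s P -> @Ind n l Om ar fn k G H m s Q.
Proof.
move=> PQ [F [RF HF]]; exists F; split=> // g a; have [h1 h2] := HF g a.
by split=> h; [apply: h1; apply/PQ | apply: h2; rewrite PQ].
Qed.

Lemma I_and n l Om ar fn k (G H : graph n l) m s P Q :
  @Ind n l Om ar fn k G H m s P -> @Ind n l Om ar fn k G H m s Q ->
  @Ind n l Om ar fn k G H m s (fun g a => P g a /\ Q g a).
Proof.
move=> [F1 [R1' H1]] [F2 [R2' H2]]; exists (fun g a => Rmult (F1 g a) (F2 g a)).
split; first exact: R_mul.
move=> g a; have [a1 b1] := H1 g a; have [a2 b2] := H2 g a; split.
- by case=> hP hQ; rewrite a1 // a2 // Rmult_1_r.
- move=> hn; case: (classic (P g a)) => hP.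
  + have hQ : ~ Q g a by move=> hQ; apply: hn.
    by rewrite b2 // Rmult_0_r.
  + by rewrite b1 // Rmult_0_l.
Qed.

Lemma I_not n l Om ar fn k (G H : graph n l) m s (i0 : 'I_m) P :
  @Ind n l Om ar fn k G H m s P ->
  @Ind n l Om ar fn k G H m s (fun g a => ~ P g a).
Proof.
move=> [F1 [R1' H1]]; exists (fun g a => Rplus R1 (Rmult (-1) (F1 g a))).
split; first by apply: R_add; [apply: R_const i0 _ | apply: R_scale].
move=> g a; have [a1 b1] := H1 g a; split.
- move=> h; rewrite b1 //; lra.
- move=> h; rewrite a1; [lra | exact: NNPP].
Qed.

Lemma I_true n l Om ar fn k (G H : graph n l) m s (i0 : 'I_m) :
  @Ind n l Om ar fn k G H m s (fun _ _ => True).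
Proof. exists (fun _ _ => R1); split; [exact: R_const i0 _ | by []]. Qed.

Lemma I_mono n l Om ar fn k (G H : graph n l) m s s' P :
  s <= s' -> @Ind n l Om ar fn k G H m s P -> @Ind n l Om ar fn k G H m s' P.
Proof. move=> ss [F [RF HF]]; exists F; split=> //; exact: R_mono RF. Qed.

Lemma I_reidx n l Om ar fn k (G H : graph n l) m m' s P (h : 'I_m -> 'I_m') :
  @Ind n l Om ar fn k G H m s P ->
  @Ind n l Om ar fn k G H m' s (fun g a => P g (fun i => a (h i))).
Proof. move=> [F [RF HF]]; exists (fun g a => F g (fun i => a (h i))); split=> //; exact: R_reidx. Qed.

Lemma I_list n l Om ar fn k (G H : graph n l) m s (i0 : 'I_m) (T : eqType) (r : seq T)
    (P : T -> bool -> ('I_m -> 'I_n) -> Prop) :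
  (forall x, @Ind n l Om ar fn k G H m s (P x)) ->
  @Ind n l Om ar fn k G H m s (fun g a => forall x, x \in r -> P x g a).
Proof.
move=> HP; elim: r => [|y r IH].
- apply: (I_iff _ (@I_true n l Om ar fn k G H m s i0)) => g a; by split.
- apply: I_iff (I_and (HP y) IH) => g a; split.
  + case=> h1 h2 x; rewrite in_cons; case/orP => [/eqP ->|] //; exact: h2.
  + move=> h; split; first by apply: h; rewrite mem_head.
    move=> x xr; apply: h; by rewrite in_cons xr orbT.
Qed.

Lemma I_forall n l Om ar fn k (G H : graph n l) m s (i0 : 'I_m) (T : finType)
    (P : T -> bool -> ('I_m -> 'I_n) -> Prop) :
  (forall x, @Ind n l Om ar fn k G H m s (P x)) ->
  @Ind n l Om ar fn k G H m s (fun g a => forall x, P x g a).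
Proof.
move=> HP; apply: I_iff (I_list i0 (enum T) HP) => g a; split.
- move=> h x; apply: h; by rewrite mem_enum.
- by move=> h x _.
Qed.

Lemma I_val n l Om ar fn k (G H : graph n l) m s (i0 : 'I_m) F (Vs : list R) r :
  @Real n l Om ar fn k G H m s F -> (forall g a, List.In (F g a) Vs) ->
  @Ind n l Om ar fn k G H m s (fun g a => F g a = r).
Proof.
move=> RF HV.
suff [F' [RF' HF']] : exists F', @Real n l Om ar fn k G H m s F' /\
    forall g a, (F g a = r -> F' g a = R1) /\
                (List.In (F g a) Vs -> F g a <> r -> F' g a = R0).
  exists F'; split=> // g a; have [h1 h2] := HF' g a; split=> // h.
  exact: h2 (HV g a) h.
elim: Vs {HV} => [|r' Vs [F' [RF' HF']]].
- exists (fun _ _ => R1); split; [exact: R_const i0 _ | by []].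
- case: (Req_EM_T r' r) => [Er|Nr].
  + exists F'; split=> // g a; have [h1 h2] := HF' g a; split=> // hin hne.
    case: hin => [E|]; [by exfalso; apply: hne; rewrite -E | by move/h2; apply].
  + exists (fun g a => Rmult (F' g a)
        (Rplus (Rmult (/ (r - r')) (F g a)) (- r' / (r - r')))).
    split.
    * apply: R_mul => //; apply: R_add; [exact: R_scale | exact: R_const i0 _].
    * move=> g a; have [h1 h2] := HF' g a; split.
      - move=> E; rewrite h1 // E; field; lra.
      - case=> [E|hin] hne.
        + rewrite -E; field_simplify; [lra | lra].
        + by rewrite h2 // Rmult_0_l.
Qed.

Lemma In_mem (T : eqType) (x : T) (s : seq T) : x \in s -> List.In x s.
Proof.
elim: s => [|y s IH] //; rewrite in_cons => /orP [/eqP ->|/IH]; [left | right] => //.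
Qed.

Lemma In_smap (A B : Type) (f : A -> B) x (s : seq A) :
  List.In x s -> List.In (f x) (map f s).
Proof. elim: s => [|y s IH] //= [->|/IH]; [left|right] => //. Qed.

Lemma I_bool n l Om ar fn k (G H : graph n l) m s (c : bool -> ('I_m -> 'I_n) -> bool) :
  @Real n l Om ar fn k G H m s (fun g b => if c g b then R1 else R0) ->
  @Ind n l Om ar fn k G H m s (fun g b => c g b).
Proof.
move=> RF; exists (fun g b => if c g b then R1 else R0); split=> // g b.
by case: (c g b); split=> // h; exfalso; apply: h.
Qed.

Lemma I_boolc n l Om ar fn k (G H : graph n l) m s (i0 : 'I_m) (cst : bool)
    (c : bool -> ('I_m -> 'I_n) -> bool) :
  @Ind n l Om ar fn k G H m s (fun g b => c g b) ->
  @Ind n l Om ar fn k G H m s (fun g b => cst = c g b).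
Proof.
move=> Hc; case: cst.
- by apply: I_iff Hc => g b; split.
- apply: I_iff (I_not i0 Hc) => g b; split.
  + by case: (c g b).
  + by move=> <-.
Qed.

Lemma I_atp n l Om ar fn k (G H : graph n l) m s (i0 : 'I_m) (x : bool)
    (a : 'I_m -> 'I_n) :
  @Ind n l Om ar fn k G H m s (fun g b => atp (gr G H x) a = atp (gr G H g) b).
Proof.
apply: (I_iff (P := fun g b => atpP (gr G H x) (gr G H g) a b)).
  by move=> g b; rewrite atpE.
apply: I_and; [|apply: I_and].
- apply: (I_forall i0) => i; apply: (I_forall i0) => j.
  apply: (I_boolc i0); apply: I_bool; exact: R_eq.
- apply: (I_forall i0) => i; apply: (I_forall i0) => j.
  apply: (I_boolc i0); apply: I_bool; exact: R_edge.
- apply: (I_forall i0) => i; apply: (I_forall i0) => sl.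
  pose Vs := map (fun v => col G v sl) (enum 'I_n) ++ map (fun v => col H v sl) (enum 'I_n).
  apply: (I_iff (P := fun g b => col (gr G H g) (b i) sl = col (gr G H x) (a i) sl)).
    by move=> g b; split.
  apply: (I_val i0 (Vs := Vs)); first exact: R_lab.
  move=> g b; rewrite /Vs; apply: List.in_or_app; case: g; [left|right];
    apply: (In_smap (fun v => col _ v sl)); apply: In_mem; by rewrite mem_enum.
Qed.

Definition pb (P : Prop) : bool := if excluded_middle_informative P then true else false.

Lemma pbP (P : Prop) : reflect P (pb P).
Proof. by rewrite /pb; case: excluded_middle_informative => h; constructor. Qed.

Lemma comb (n : nat) (Z : finType) (T : Z -> Z -> Prop)
  (Tr : forall z, T z z) (Ts : forall z1 z2, T z1 z2 -> T z2 z1)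
  (Tt : forall z1 z2 z3, T z1 z2 -> T z2 z3 -> T z1 z3)
  (f h : 'I_n -> Z) :
  (exists sg : {perm 'I_n}, forall u, T (f u) (h (sg u))) <->
  (forall z0, count (fun u => pb (T z0 (f u))) (enum 'I_n) =
              count (fun u => pb (T z0 (h u))) (enum 'I_n)).
Proof.
pose rep z := [pick z' | pb (T z z')].
have repS : forall z, exists y, rep z = Some y /\ T z y.
  move=> z; rewrite /rep; case: pickP => [y /pbP Hy|H0]; first by exists y.
  exfalso; move: (H0 z); by case: pbP => // /(_ (Tr z)).
have repE : forall z1 z2, (rep z2 == rep z1) = pb (T z1 z2).
  move=> z1 z2; apply/eqP/pbP => [E|E].
  - have [y1 [E1 T1]] := repS z1; have [y2 [E2 T2]] := repS z2.
    rewrite E1 E2 in E; case: E => Ey; subst y2; exact: Tt _ _ _ T1 (Ts _ _ T2).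
  - rewrite /rep; apply: eq_pick => z' /=.
    apply/idP/idP => /pbP H; apply/pbP; [exact: Tt _ _ _ E H | exact: Tt _ _ _ (Ts _ _ E) H].
split.
- case=> sg Hs z0.
  transitivity (count (fun u => pb (T z0 (h (sg u)))) (enum 'I_n)).
    apply: eq_count => u; apply/idP/idP => /pbP H; apply/pbP;
      [exact: Tt _ _ _ H (Hs u) | exact: Tt _ _ _ H (Ts _ _ (Hs u))].
  have -> : count (fun u => pb (T z0 (h (sg u)))) (enum 'I_n) =
            count (fun v => pb (T z0 (h v))) (map sg (enum 'I_n)).
    by rewrite [RHS]count_map.
  have Hp : perm_eq (map sg (enum 'I_n)) (enum 'I_n).
    apply: uniq_perm; [rewrite map_inj_uniq ?enum_uniq //; exact: perm_inj
                      | exact: enum_uniq | ].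
    move=> x; rewrite mem_enum; apply/mapP; exists ((sg^-1)%g x);
      [by rewrite mem_enum | by rewrite permKV].
  by move/seq.permP: Hp => ->.
- move=> C.
  pose tf := [tuple rep (f i) | i < n]; pose th := [tuple rep (h i) | i < n].
  have Ef : val tf = map (fun i => rep (f i)) (enum 'I_n).
    by rewrite -[val tf](map_tnth_enum tf); apply: eq_map => i; rewrite tnth_mktuple.
  have Eh : val th = map (fun i => rep (h i)) (enum 'I_n).
    by rewrite -[val th](map_tnth_enum th); apply: eq_map => i; rewrite tnth_mktuple.
  have E1 : forall (g : 'I_n -> Z) z,
      count (preim (fun i => rep (g i)) (pred1 (rep z))) (enum 'I_n) =
      count (fun v => pb (T z (g v))) (enum 'I_n).
    by move=> g z; apply: eq_count => v /=; rewrite repE.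
  have P : perm_eq tf th.
    rewrite Ef Eh /perm_eq; apply/allP => c; rewrite mem_cat => Hc /=.
    rewrite (count_map (fun i => rep (f i))) (count_map (fun i => rep (h i))).
    case/orP: Hc => /mapP [u _ ->]; by rewrite !E1 C.
  have [p Hp] := tuple_permP P.
  exists p => u.
  have Ht : tf = [tuple tnth th (p i) | i < n] by apply: val_inj.
  have := congr1 (fun t => tnth t u) Ht; rewrite !tnth_mktuple => E.
  by apply/pbP; rewrite -repE E.
Qed.

Definition gi k (i : 'I_k) : 'I_k -> 'I_k.+1 :=
  fun m => if m == i then ord_max else lift ord_max m.

Lemma repl_snoc n k (a : 'I_k -> 'I_n) i u : repl a i u = (fun m => snoc a u (gi i m)).
Proof.
apply: functional_extensionality => m; rewrite /repl /gi.
by case: eqP => _; rewrite ?snoc_max ?snoc_lift.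
Qed.

Lemma ffK n m (c : 'I_m -> 'I_n) : fun_of_fin [ffun i => c i] = c.
Proof. by apply: functional_extensionality => i; rewrite ffunE. Qed.

Definition TT n l k s (G H : graph n l) (z1 z2 : bool * {ffun 'I_k.+1 -> 'I_n}) : Prop :=
  atp (gr G H z1.1) z1.2 = atp (gr G H z2.1) z2.2 /\
  forall i : 'I_k, wl_same s (gr G H z1.1) (gr G H z2.1)
    (fun m => z1.2 (gi i m)) (fun m => z2.2 (gi i m)).

Definition cnt n l k s (G H : graph n l) (z0 : bool * {ffun 'I_k.+1 -> 'I_n})
   (g : bool) (a : 'I_k -> 'I_n) : nat :=
  count (fun u => pb (TT s G H z0 (g, [ffun i => snoc a u i]))) (enum 'I_n).

Lemma wl_step n l k s (G H : graph n l) (x y : bool) (a b : 'I_k -> 'I_n) :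
  wl_same s.+1 (gr G H x) (gr G H y) a b <->
  wl_same s (gr G H x) (gr G H y) a b /\
  forall z0, cnt s G H z0 x a = cnt s G H z0 y b.
Proof.
pose ZZ := (bool * {ffun 'I_k.+1 -> 'I_n})%type.
have Tr : forall z : ZZ, TT s G H z z.
  by move=> z; split=> // i; apply: W_refl.
have Ts : forall z1 z2 : ZZ, TT s G H z1 z2 -> TT s G H z2 z1.
  by move=> z1 z2 [A B]; split; [rewrite A | move=> i; apply: W_sym (B i)].
have Tt : forall z1 z2 z3 : ZZ, TT s G H z1 z2 -> TT s G H z2 z3 -> TT s G H z1 z3.
  by move=> z1 z2 z3 [A B] [C D]; split; [rewrite A | move=> i; apply: W_trans (B i) (D i)].
have CB := comb Tr Ts Tt (fun u => (x, [ffun i => snoc a u i]))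
                        (fun u => (y, [ffun i => snoc b u i])).
rewrite /=; split.
- case=> W [sg Hs]; split=> //; apply: CB.1; exists sg => u.
  have [A B] := Hs u; rewrite /TT /= !ffK; split=> // i; by rewrite -!repl_snoc.
- case=> W C; split=> //; have [sg Hs] := CB.2 C; exists sg => u.
  have [A B] := Hs u; rewrite /= !ffK in A B; split=> // i; by rewrite !repl_snoc.
Qed.

Lemma sum_ind n (r : seq 'I_n) (F : 'I_n -> R) (P : 'I_n -> Prop) :
  (forall u, (P u -> F u = R1) /\ (~ P u -> F u = R0)) ->
  \big[Rplus/R0]_(u <- r) F u = INR (count (fun u => pb (P u)) r).
Proof.
move=> HF; elim: r => [|u r IH]; first by rewrite big_nil.
rewrite big_cons IH /= plus_INR; case: pbP => h.
- by rewrite (HF u).1.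
- by rewrite (HF u).2 //= Rplus_0_l.
Qed.

Lemma idxE (T : finType) : index_enum T = enum T.
Proof. by rewrite [index_enum T]unlock enumT. Qed.

Lemma I_wl n l Om ar fn k (hk : 0 < k) (G H : graph n l) s :
  forall (x : bool) (a : 'I_k -> 'I_n),
  @Ind n l Om ar fn k G H k s (fun g b => wl_same s (gr G H x) (gr G H g) a b).
Proof.
have i0 : 'I_k := Ordinal hk.
elim: s => [|s IH] x a.
- apply: (@I_iff n l Om ar fn k G H k 0 (fun g b => atp (gr G H x) a = atp (gr G H g) b)); first by move=> g b; split.
  exact: (@I_atp n l Om ar fn k G H k 0 i0 x a).
- apply: (I_iff (P := fun g b => wl_same s (gr G H x) (gr G H g) a b /\
                 forall z0, cnt s G H z0 g b = cnt s G H z0 x a)).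
    move=> g b; rewrite wl_step; split; case=> W C; split=> // z0; by rewrite C.
  apply: I_and; first exact: I_mono (leqnSn s) (IH x a).
  apply: (I_forall i0) => z0.
  have [FT [RT HT]] : @Ind n l Om ar fn k G H k.+1 s
      (fun g c => TT s G H z0 (g, [ffun i => c i])).
    apply: (I_iff (P := fun g c => atp (gr G H z0.1) z0.2 = atp (gr G H g) c /\
       forall i, wl_same s (gr G H z0.1) (gr G H g)
                   (fun m => z0.2 (gi i m)) (fun m => c (gi i m)))).
      by move=> g c; rewrite /TT /= ffK.
    apply: I_and; first exact: (@I_atp n l Om ar fn k G H k.+1 s ord_max z0.1 z0.2).
    apply: (I_forall ord_max) => i.
    exact: (I_reidx (gi i) (IH z0.1 (fun m => z0.2 (gi i m)))).
  pose N := fun g b => \big[Rplus/R0]_(u < n) FT g (snoc b u).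
  have RN : @Real n l Om ar fn k G H k s.+1 N := R_sum RT.
  have EN : forall g b, N g b = INR (cnt s G H z0 g b).
    move=> g b; rewrite /N /cnt idxE; apply: (@sum_ind n _ _ (fun u =>
       TT s G H z0 (g, [ffun i => snoc b u i]))) => u; exact: HT.
  apply: (I_iff (P := fun g b => N g b = INR (cnt s G H z0 x a))).
    move=> g b; rewrite EN; split; [exact: INR_eq | by move->].
  apply: (I_val i0 (Vs := map INR (iota 0 n.+1))) => // g b.
  rewrite EN; apply: In_smap; apply: In_mem; rewrite mem_iota /= add0n ltnS.
  by rewrite -[X in _ <= X](size_enum_ord n) count_size.
Qed.

Lemma bwd_main n l (Om : Type) (ar : Om -> nat) (fn : forall o, ('I_(ar o) -> R) -> R)
    (t k : nat) (hk : 0 < k) (G H : graph n l) (v w : 'I_n) :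
  rho1_TL fn k.+1 t G H v w -> vwl_same k t G H v w.
Proof.
move=> Hr.
have [F [[e he] HF]] := @I_wl n l Om ar fn k hk G H t true (fun _ => v).
pose p := fun _ : 'I_k => 1.
have hp : forall i, 0 < p i <= k.+1 by [].
have [V [S [Fr Ev]]] := he p hp.
have := Hr (e p) (conj V S).
have Fa : free_among 1 (e p) by move=> x /Fr [i ->].
move=> /(_ Fa); rewrite (Ev _).1 (Ev _).2 /= => E.
have E1 : F true (fun _ => v) = R1 by apply: (HF _ _).1; apply: W_refl.
case: (classic (vwl_same k t G H v w)) => // hn.
have E0 : F false (fun _ => w) = R0 by apply: (HF _ _).2.
by exfalso; move: E; rewrite E1 E0; apply: R1_neq_R0.
Qed.

Theorem theorem2 (n l : nat) (hn : 0 < n) (hl : 0 < l)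
    (Om : Type) (ar : Om -> nat) (fn : forall o : Om, ('I_(ar o) -> R) -> R)
    (t k : nat) (hk : 0 < k) (G H : graph n l) (v w : 'I_n) :
  vwl_same k t G H v w <-> rho1_TL fn k.+1 t G H v w.
Proof. split; [exact: fwd_main | exact: bwd_main]. Qed.
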